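(* Let $a_1,a_2\in\mathbb{R}$ with $a_1^2+4a_2>0$, and assume either $a_1<0$ and $a_2<0$, or $a_2>0$ and $a_1+a_2<1$. Let $X$ be the AR(2)-process with these coefficients and $s_2:=(a_1-\sqrt{a_1^2+4a_2})/2$. Then $s_2<0$, $-a_2/s_2<1$, and $Z_n:=X_n-s_2X_{n-1}$ satisfies $Z_n=(-a_2/s_2)Z_{n-1}+Y_n$ for $n\ge1$. In particular, for all $x\ge0$ and $N\ge1$, $$\mathbb{P}\Big(\sup_{n=1,\dots,N}X_n\le x\Big)\le\mathbb{P}\Big(\sup_{n=1,\dots,N}Z_n\le(1-s_2)x\Big).$$
   Context: Let $(Y_n)_{n\ge1}$ be i.i.d. nondegenerate real random variables. The AR(2)-process is $X_n=a_1X_{n-1}+a_2X_{n-2}+Y_n$ for $n\ge1$ with $X_n=0$ for $n\le0$. *)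

(* Defs.v *)
From Stdlib Require Import Reals Lra List.
Open Scope R_scope.

(* A probability space: a sigma-algebra [meas] of events on [Omega] and a
   countably additive probability [prob] (values on non-events are irrelevant). *)
Record ProbSpace := {
  Omega : Type;
  meas : (Omega -> Prop) -> Prop;
  meas_full : meas (fun _ => True);
  meas_compl : forall A, meas A -> meas (fun w => ~ A w);
  meas_countable_union : forall A : nat -> Omega -> Prop,
      (forall n, meas (A n)) -> meas (fun w => exists n, A n w);
  prob : (Omega -> Prop) -> R;
  prob_nonneg : forall A, meas A -> 0 <= prob A;
  prob_full : prob (fun _ => True) = 1;
  prob_sigma_additive : forall A : nat -> Omega -> Prop,
      (forall n, meas (A n)) ->
      (forall i j w, i <> j -> A i w -> A j w -> False) ->
      infinite_sum (fun n => prob (A n)) (prob (fun w => exists n, A n w))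
}.

(* A real random variable: Borel measurable, i.e. all sets {X <= t} are events. *)
Definition random_variable (P : ProbSpace) (X : Omega P -> R) : Prop :=
  forall t, meas P (fun w => X w <= t).

Definition iid_nondegenerate (P : ProbSpace) (Y : nat -> Omega P -> R) : Prop :=
  (forall n, (1 <= n)%nat -> random_variable P (Y n)) /\
  (* mutual independence: joint CDFs of finitely many distinct indices factor *)
  (forall (l : list nat) (t : nat -> R),
      NoDup l -> Forall (fun i => (1 <= i)%nat) l ->
      prob P (fun w => Forall (fun i => Y i w <= t i) l)
      = fold_right (fun i acc => prob P (fun w => Y i w <= t i) * acc) 1 l) /\
  (forall n t, (1 <= n)%nat ->
      prob P (fun w => Y n w <= t) = prob P (fun w => Y 1%nat w <= t)) /\
  ~ (exists c, prob P (fun w => Y 1%nat w = c) = 1).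

(* AR(2) recursion: ar2_pair n = (X_n, X_{n-1}), with X_n = 0 for n <= 0 and
   X_n = a1 X_{n-1} + a2 X_{n-2} + y n for n >= 1. *)
Fixpoint ar2_pair (a1 a2 : R) (y : nat -> R) (n : nat) : R * R :=
  match n with
  | O => (0, 0)
  | S m => let (p, q) := ar2_pair a1 a2 y m in (a1 * p + a2 * q + y (S m), p)
  end.

Definition ar2 (a1 a2 : R) (y : nat -> R) (n : nat) : R := fst (ar2_pair a1 a2 y n).

(* Main.v *)
Require Import Defs.
From Stdlib Require Import Reals Lra List.
From Stdlib Require Import Lia ZArith Classical FunctionalExtensionality PropExtensionality.
Open Scope R_scope.

Section Aux.
Variable P : ProbSpace.

Lemma meas_ext (A B : Omega P -> Prop) : (forall w, A w <-> B w) -> meas P A -> meas P B.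
Proof.
  intros H HA. assert (E : A = B).
  { apply functional_extensionality; intro w; apply propositional_extensionality; auto. }
  now rewrite <- E.
Qed.

Lemma meas_empty : meas P (fun _ => False).
Proof. apply (meas_ext (fun w => ~ True)). tauto. apply meas_compl, meas_full. Qed.

Lemma meas_union2 A B : meas P A -> meas P B -> meas P (fun w => A w \/ B w).
Proof.
  intros HA HB.
  apply (meas_ext (fun w => exists n:nat, (match n with O => A | _ => B end) w)).
  - intro w; split. intros [[|n] H]; auto. intros [H|H]. exists O; auto. exists 1%nat; auto.
  - apply meas_countable_union. intros [|n]; auto.
Qed.

Lemma meas_inter A B : meas P A -> meas P B -> meas P (fun w => A w /\ B w).
Proof.
  intros HA HB.
  apply (meas_ext (fun w => ~ (~ A w \/ ~ B w))).
  - intro w; destruct (classic (A w)); destruct (classic (B w)); tauto.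
  - apply meas_compl, meas_union2; apply meas_compl; auto.
Qed.

Definition mfun (f : Omega P -> R) := forall t, meas P (fun w => f w <= t).

Lemma mfun_ext f g : mfun f -> (forall w, f w = g w) -> mfun g.
Proof. intros H E t. apply (meas_ext (fun w => f w <= t)). intro w; rewrite E; tauto. apply H. Qed.

Lemma mfun_lt f t : mfun f -> meas P (fun w => f w < t).
Proof.
  intro H. apply (meas_ext (fun w => exists n, f w <= t - / INR (S n))).
  - intro w; split.
    + intros [n Hn]. assert (0 < / INR (S n)) by (apply Rinv_0_lt_compat, lt_0_INR; lia). lra.
    + intro Hl. destruct (archimed_cor1 (t - f w)) as [N [HN1 HN2]]. lra.
      exists (N - 1)%nat. replace (S (N-1)) with N by lia. lra.
  - apply meas_countable_union. intro n; apply H.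
Qed.

Lemma mfun_gt f t : mfun f -> meas P (fun w => f w > t).
Proof. intro H. apply (meas_ext (fun w => ~ f w <= t)). intro; lra. apply meas_compl, H. Qed.

Lemma mfun_ge f t : mfun f -> meas P (fun w => f w >= t).
Proof. intro H. apply (meas_ext (fun w => ~ f w < t)). intro; lra. apply meas_compl, mfun_lt, H. Qed.

Lemma mfun_const c : mfun (fun _ => c).
Proof.
  intro t. destruct (Rle_dec c t).
  - apply (meas_ext (fun _ => True)). tauto. apply meas_full.
  - apply (meas_ext (fun _ => False)). tauto. apply meas_empty.
Qed.

Lemma mfun_scal a f : mfun f -> mfun (fun w => a * f w).
Proof.
  intros H t. destruct (Rtotal_order a 0) as [Ha|[Ha|Ha]].
  - apply (meas_ext (fun w => f w >= t / a)).
    + intro w. assert (E : a * (t / a) = t) by (field; lra). split; intro; nra.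
    + apply mfun_ge, H.
  - subst. apply (mfun_ext (fun _ => 0)). apply mfun_const. intro; ring.
  - apply (meas_ext (fun w => f w <= t / a)).
    + intro w. assert (E : a * (t / a) = t) by (field; lra). split; intro; nra.
    + apply H.
Qed.

Lemma IZR_nat (k:Z) : IZR k = INR (Z.to_nat k) - INR (Z.to_nat (- k)).
Proof. destruct k; simpl. lra. rewrite INR_IPR; unfold IZR; lra. rewrite INR_IPR; unfold IZR; lra. Qed.

Lemma mfun_plus f g : mfun f -> mfun g -> mfun (fun w => f w + g w).
Proof.
  intros Hf Hg t.
  pose (q := fun n m j : nat => (INR m - INR j) / INR (S n)).
  apply (meas_ext (fun w => ~ exists n m j, f w > q n m j /\ g w > t - q n m j)).
  - intro w; split.
    + intro H. apply NNPP; intro H2. apply H.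
      destruct (archimed_cor1 (f w + g w - t)) as [N [HN1 HN2]]. lra.
      set (r := t - g w). set (x := r * INR N).
      destruct (archimed x) as [A1 A2].
      exists (N-1)%nat, (Z.to_nat (up x)), (Z.to_nat (- up x)).
      unfold q. replace (S (N-1)) with N by lia. rewrite <- IZR_nat.
      assert (HNp : 0 < INR N) by (apply lt_0_INR; lia).
      assert (E1 : IZR (up x) / INR N > r).
      { apply Rmult_gt_reg_r with (INR N); auto. unfold Rdiv. rewrite Rmult_assoc, Rinv_l by lra. unfold x in *; lra. }
      assert (E2 : IZR (up x) / INR N <= r + / INR N).
      { apply Rmult_le_reg_r with (INR N); auto. unfold Rdiv. rewrite Rmult_assoc, Rinv_l by lra.
        rewrite Rmult_plus_distr_r, Rinv_l by lra. unfold x in *; lra. }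
      unfold r in *. split; lra.
    + intros H [n [m [j [H1 H2]]]]. lra.
  - apply meas_compl. apply meas_countable_union; intro n.
    apply meas_countable_union; intro m. apply meas_countable_union; intro j.
    apply meas_inter. apply mfun_gt, Hf. apply mfun_gt, Hg.
Qed.

Lemma sum_const p n : sum_f_R0 (fun _ => p) n = INR (S n) * p.
Proof. induction n. simpl; ring. simpl sum_f_R0. rewrite IHn. rewrite (S_INR (S n)). ring. Qed.

Lemma prob_empty : prob P (fun _ => False) = 0.
Proof.
  pose proof (prob_sigma_additive P (fun _ _ => False) (fun _ => meas_empty) (fun _ _ _ _ f _ => f)) as H.
  assert (E : (fun w : Omega P => exists _ : nat, False) = (fun _ => False)).
  { apply functional_extensionality; intro; apply propositional_extensionality; firstorder. }
  cbv beta in H; rewrite E in H. set (p := prob P (fun _ => False)) in *.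
  destruct (Req_dec p 0) as [|Hp]; auto. exfalso.
  destruct (H (Rabs p / 2)) as [N HN].
  - apply Rabs_pos_lt in Hp. lra.
  - specialize (HN N (le_n _)) as H1. specialize (HN (S N) (le_S _ _ (le_n _))) as H2.
    unfold R_dist in *. rewrite sum_const in H1, H2.
    rewrite (S_INR (S N)) in H2.
    set (v := INR (S N) * p) in *.
    replace ((INR (S N) + 1) * p - p) with (v + p - p) in H2 by (unfold v; ring).
    apply Rabs_def2 in H1; apply Rabs_def2 in H2.
    unfold Rabs in *; destruct (Rcase_abs p); lra.
Qed.

Lemma prob_mono A B : meas P A -> meas P B -> (forall w, A w -> B w) -> prob P A <= prob P B.
Proof.
  intros HA HB Hsub.
  set (D := fun w => B w /\ ~ A w).
  assert (HD : meas P D) by (apply meas_inter; auto; apply meas_compl; auto).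
  set (Sq := fun n : nat => match n with O => A | 1%nat => D | _ => fun _ => False end).
  assert (HS : forall n, meas P (Sq n)) by (intros [|[|n]]; simpl; auto using meas_empty).
  assert (Hdis : forall i j w, i <> j -> Sq i w -> Sq j w -> False).
  { intros [|[|i]] [|[|j]] w Hij; unfold Sq; simpl; unfold D; try tauto; lia. }
  pose proof (prob_sigma_additive P Sq HS Hdis) as H.
  assert (E : (fun w => exists n, Sq n w) = B).
  { apply functional_extensionality; intro w; apply propositional_extensionality; split.
    - intros [[|[|n]] Hn]; unfold Sq in Hn; simpl in Hn; unfold D in *; first [tauto | apply Hsub; auto].
    - intro Hb. destruct (classic (A w)). exists O; auto. exists 1%nat; unfold Sq; simpl; unfold D; auto. }
  rewrite E in H.
  assert (Hsum : forall n, (1 <= n)%nat -> sum_f_R0 (fun n => prob P (Sq n)) n = prob P A + prob P D).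
  { induction n; intro Hn. lia. destruct n. simpl. ring.
    simpl sum_f_R0 in *. rewrite IHn by lia. simpl. rewrite prob_empty. ring. }
  pose proof (prob_nonneg P D HD).
  destruct (Rle_dec (prob P A) (prob P B)) as [|Hn]; auto. exfalso.
  destruct (H (prob P A - prob P B)) as [N HN]. lra.
  specialize (HN (max N 1) (Nat.le_max_l _ _)). rewrite Hsum in HN by lia.
  unfold R_dist in HN. rewrite Rabs_right in HN; lra.
Qed.

Lemma meas_forall_le (F : nat -> Omega P -> R) c N :
  (forall n, mfun (F n)) -> meas P (fun w => forall n, (1 <= n <= N)%nat -> F n w <= c).
Proof.
  intro HF. induction N.
  - apply (meas_ext (fun _ => True)). intro; split; auto; intros; lia. apply meas_full.
  - apply (meas_ext (fun w => (forall n, (1 <= n <= N)%nat -> F n w <= c) /\ F (S N) w <= c)).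
    + intro w; split.
      * intros [H1 H2] n Hn. destruct (Nat.eq_dec n (S N)). subst; auto. apply H1; lia.
      * intro H; split; intros; apply H; lia.
    + apply meas_inter; auto. apply HF.
Qed.

End Aux.

Lemma ar2_pair_S a1 a2 y m : ar2_pair a1 a2 y (S m) =
  (a1 * fst (ar2_pair a1 a2 y m) + a2 * snd (ar2_pair a1 a2 y m) + y (S m), fst (ar2_pair a1 a2 y m)).
Proof. simpl. destruct (ar2_pair a1 a2 y m); reflexivity. Qed.

Lemma ar2_snd a1 a2 y m : snd (ar2_pair a1 a2 y m) = ar2 a1 a2 y (m - 1).
Proof. destruct m. reflexivity. rewrite ar2_pair_S. simpl. unfold ar2. now rewrite Nat.sub_0_r. Qed.

Theorem mainTheorem11 (P : ProbSpace) (Y : nat -> Omega P -> R) (a1 a2 : R) :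
  iid_nondegenerate P Y ->
  a1 ^ 2 + 4 * a2 > 0 ->
  ((a1 < 0 /\ a2 < 0) \/ (a2 > 0 /\ a1 + a2 < 1)) ->
  let s2 := (a1 - sqrt (a1 ^ 2 + 4 * a2)) / 2 in
  let X := fun (n : nat) (w : Omega P) => ar2 a1 a2 (fun k => Y k w) n in
  let Z := fun (n : nat) (w : Omega P) => X n w - s2 * X (n - 1)%nat w in
  s2 < 0 /\
  - a2 / s2 < 1 /\
  (forall (n : nat) (w : Omega P), (1 <= n)%nat ->
      Z n w = (- a2 / s2) * Z (n - 1)%nat w + Y n w) /\
  (forall (x : R) (N : nat), 0 <= x -> (1 <= N)%nat ->
      prob P (fun w => forall n, (1 <= n <= N)%nat -> X n w <= x)
      <= prob P (fun w => forall n, (1 <= n <= N)%nat -> Z n w <= (1 - s2) * x)).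
Proof.
  intros HY HD Hc s2 X Z.
  set (r := sqrt (a1 ^ 2 + 4 * a2)) in *.
  assert (Hr0 : 0 <= r) by apply sqrt_pos.
  assert (Hr2 : r * r = a1 ^ 2 + 4 * a2) by (apply sqrt_sqrt; lra).
  assert (Hs2 : s2 < 0).
  { unfold s2. destruct Hc as [[H1 H2]|[H1 H2]]. lra. nra. }
  assert (Hs1 : - a2 / s2 = (a1 + r) / 2).
  { unfold s2 in *. replace a2 with ((r * r - a1 ^ 2) / 4) by lra. field. lra. }
  split; [exact Hs2|]. split.
  { rewrite Hs1. destruct Hc as [[H1 H2]|[H1 H2]].
    - assert (r < - a1) by nra. lra.
    - assert (r < 2 - a1) by nra. lra. }
  split.
  { intros n w Hn. destruct n as [|m]. lia. rewrite Hs1.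
    unfold Z, X. replace (S m - 1)%nat with m by lia.
    unfold ar2 at 1. rewrite ar2_pair_S, ar2_snd. simpl fst.
    unfold ar2. unfold s2.
    set (u := fst (ar2_pair a1 a2 (fun k : nat => Y k w) m)).
    set (v := fst (ar2_pair a1 a2 (fun k : nat => Y k w) (m - 1))).
    replace a2 with ((r * r - a1 ^ 2) / 4) by lra. field. }
  intros x N Hx HN.
  assert (HYm : forall k, (1 <= k)%nat -> mfun P (Y k)) by (intros; apply HY; auto).
  assert (HXm : forall m, mfun P (fun w => fst (ar2_pair a1 a2 (fun k => Y k w) m)) /\
                          mfun P (fun w => snd (ar2_pair a1 a2 (fun k => Y k w) m))).
  { induction m.
    - split; simpl; apply mfun_const.
    - destruct IHm as [I1 I2]. split.
      + eapply mfun_ext. 2: intro w; rewrite ar2_pair_S; reflexivity. simpl.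
        apply mfun_plus. apply mfun_plus; apply mfun_scal; auto. apply HYm; lia.
      + eapply mfun_ext. 2: intro w; rewrite ar2_pair_S; reflexivity. simpl. auto. }
  assert (HX : forall n, mfun P (X n)) by (intro n; apply HXm).
  assert (HZ : forall n, mfun P (Z n)).
  { intro n. eapply mfun_ext. apply (mfun_plus P (X n)). apply HX. apply (mfun_scal P (- s2) (X (n-1)%nat)), HX.
    intro w; unfold Z; ring. }
  apply prob_mono.
  - apply meas_forall_le; auto.
  - apply meas_forall_le; auto.
  - intros w H n Hn. unfold Z.
    assert (H1 : X n w <= x) by auto.
    assert (H2 : X (n - 1)%nat w <= x).
    { destruct (Nat.eq_dec n 1). subst. simpl. unfold X, ar2. simpl. lra. apply H; lia. }
    nra.
Qed.
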